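(* Let $(L,\le,(\sqsubseteq_\alpha)_{\alpha<\kappa})$ be a model of Axioms 1–4. Then $(L,\sqsubseteq)$ is a complete lattice. More precisely, $\perp\sqsubseteq x$ for every $x\in L$, and every nonempty subset of $L$ has a least upper bound with respect to $\sqsubseteq$.
   Context: Setting (model of Axioms 1–4). Let $(L,\le)$ be a complete lattice with join operation $\bigvee$ and least element $\perp$. Let $\kappa>0$ be an ordinal, and for each ordinal $\alpha<\kappa$ let $\sqsubseteq_\alpha$ be a preorder (reflexive and transitive relation) on $L$. Derived relations: - $x=_\alpha y$ means $x\sqsubseteq_\alpha y$ and $y\sqsubseteq_\alpha x$. - $x\sqsubset_\alpha y$ means $x\sqsubseteq_\alpha y$ and not $x=_\alpha y$. - $\sqsubset=\bigcup_{\alpha<\kappa}\sqsubset_\alpha$. - $x\sqsubseteq y$ means $x\sqsubset y$ or $x=y$. Derived sets, for $x\in L$ and $\alpha<\kappa$: - $(x]_\alpha=\{y\in L:\forall\beta<\alpha,\ x=_\beta y\}$. - $[x]_\alpha=\{y\in L: x=_\alpha y\}$. For a set $X$, $X\sqsubseteq_\alpha y$ means $x\sqsubseteq_\alpha y$ for all $x\in X$. The structure is a model of Axioms 1–4 if: - (A1) for all $\alpha<\beta<\kappa$, $x\sqsubseteq_\beta y$ implies $x=_\alpha y$; - (A2) $\bigcap_{\alpha<\kappa}=_\alpha$ is the identity relation on $L$; - (A3) for every $x\in L$, every $\alpha<\kappa$ and every $X\subseteq(x]_\alpha$ there is $y\in(x]_\alpha$ with $X\sqsubseteq_\alpha y$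 such that for all $z\in(x]_\alpha$ with $X\sqsubseteq_\alpha z$ we have $y\sqsubseteq_\alpha z$ and $y\le z$; - (A4) for every nonempty $X\subseteq L$, every $\alpha<\kappa$ and every $y\in L$, if $y=_\alpha x$ for all $x\in X$ then $y=_\alpha\bigvee X$. *)

(* Defs.v *)
Set Implicit Arguments.

Definition partial_order {L : Type} (le : L -> L -> Prop) : Prop :=
  (forall x, le x x) /\
  (forall x y z, le x y -> le y z -> le x z) /\
  (forall x y, le x y -> le y x -> x = y).

Definition is_lub {L : Type} (le : L -> L -> Prop) (X : L -> Prop) (y : L) : Prop :=
  (forall x, X x -> le x y) /\
  (forall z, (forall x, X x -> le x z) -> le y z).

Definition complete_lattice {L : Type} (le : L -> L -> Prop)
    (sup : (L -> Prop) -> L) : Prop :=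
  partial_order le /\ forall X : L -> Prop, is_lub le X (sup X).

Definition bot {L : Type} (sup : (L -> Prop) -> L) : L := sup (fun _ => False).

(* ---- Ordinals below kappa: a nonempty well-ordered index type (I, lt) ---- *)
Definition well_order {I : Type} (lt : I -> I -> Prop) : Prop :=
  (forall a, ~ lt a a) /\
  (forall a b c, lt a b -> lt b c -> lt a c) /\
  (forall a b, lt a b \/ a = b \/ lt b a) /\
  well_founded lt.

Definition preorder_family {I L : Type} (pre : I -> L -> L -> Prop) : Prop :=
  forall a, (forall x, pre a x x) /\ (forall x y z, pre a x y -> pre a y z -> pre a x z).

Definition eqa {I L : Type} (pre : I -> L -> L -> Prop) (a : I) (x y : L) : Prop :=
  pre a x y /\ pre a y x.

Definition lta {I L : Type} (pre : I -> L -> L -> Prop) (a : I) (x y : L) : Prop :=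
  pre a x y /\ ~ eqa pre a x y.

Definition sqlt {I L : Type} (pre : I -> L -> L -> Prop) (x y : L) : Prop :=
  exists a : I, lta pre a x y.

Definition sqle {I L : Type} (pre : I -> L -> L -> Prop) (x y : L) : Prop :=
  sqlt pre x y \/ x = y.

Definition down {I L : Type} (lt : I -> I -> Prop) (pre : I -> L -> L -> Prop)
    (x : L) (a : I) : L -> Prop :=
  fun y => forall b, lt b a -> eqa pre b x y.

Definition cls {I L : Type} (pre : I -> L -> L -> Prop) (x : L) (a : I) : L -> Prop :=
  fun y => eqa pre a x y.

Definition Axiom1 {I L : Type} (lt : I -> I -> Prop) (pre : I -> L -> L -> Prop) : Prop :=
  forall a b, lt a b -> forall x y, pre b x y -> eqa pre a x y.

Definition Axiom2 {I L : Type} (pre : I -> L -> L -> Prop) : Prop :=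
  forall x y, (forall a, eqa pre a x y) <-> x = y.

Definition Axiom3 {I L : Type} (le : L -> L -> Prop) (lt : I -> I -> Prop)
    (pre : I -> L -> L -> Prop) : Prop :=
  forall (x : L) (a : I) (X : L -> Prop),
    (forall w, X w -> down lt pre x a w) ->
    exists y, down lt pre x a y /\ (forall w, X w -> pre a w y) /\
      (forall z, down lt pre x a z -> (forall w, X w -> pre a w z) ->
         pre a y z /\ le y z).

Definition Axiom4 {I L : Type} (sup : (L -> Prop) -> L) (pre : I -> L -> L -> Prop) : Prop :=
  forall (X : L -> Prop) (a : I) (y : L),
    (exists x, X x) -> (forall x, X x -> eqa pre a y x) -> eqa pre a y (sup X).

(* Main.v *)
Require Import Defs.
From Stdlib Require Import Classical.

Definition Xb {I L : Type} (X : L -> Prop) (lt : I -> I -> Prop) (pre : I -> L -> L -> Prop)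
  (w : L) (b : I) : L -> Prop := fun x => X x /\ down lt pre w b x.

Definition Cond {I L : Type} (X : L -> Prop) (lt : I -> I -> Prop) (pre : I -> L -> L -> Prop)
  (w : L) (b : I) : Prop :=
  (forall x, Xb X lt pre w b x -> pre b x w) /\
  (forall z, down lt pre w b z -> (forall x, Xb X lt pre w b x -> pre b x z) -> pre b w z).

Definition AU {I L : Type} (lt : I -> I -> Prop) (pre : I -> L -> L -> Prop)
  (d : I) (w z : L) : Prop := forall b, ~ lt d b -> eqa pre b w z.

Definition good {I L : Type} (le : L -> L -> Prop) (X : L -> Prop) (lt : I -> I -> Prop)
  (pre : I -> L -> L -> Prop) (d : I) (w : L) : Prop :=
  (forall b, ~ lt d b -> Cond X lt pre w b) /\ (forall z, AU lt pre d w z -> le w z).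

Theorem mainTheorem1 (L : Type) (le : L -> L -> Prop) (sup : (L -> Prop) -> L)
  (I : Type) (lt : I -> I -> Prop) (pre : I -> L -> L -> Prop) :
  complete_lattice le sup ->
  well_order lt -> inhabited I ->
  preorder_family pre ->
  Axiom1 lt pre -> Axiom2 pre -> Axiom3 le lt pre -> Axiom4 sup pre ->
  partial_order (sqle pre) /\
  (forall x : L, sqle pre (bot sup) x) /\
  (forall X : L -> Prop, (exists x, X x) -> exists y, is_lub (sqle pre) X y).
Proof.
intros HCL HWO HI HP A1 A2 A3 A4.
destruct HCL as [[leR [leT leA]] Hsup].
destruct HWO as [ltIr [ltT [ltTot ltWf]]].
assert (eR : forall a x, eqa pre a x x) by (intros; split; apply HP).
assert (eS : forall a x y, eqa pre a x y -> eqa pre a y x)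
  by (intros a x y [h1 h2]; split; auto).
assert (pT : forall a x y z, pre a x y -> pre a y z -> pre a x z)
  by (intros; eapply (proj2 (HP a)); eauto).
assert (pR : forall a x, pre a x x) by (intros; apply (proj1 (HP a))).
assert (eT : forall a x y z, eqa pre a x y -> eqa pre a y z -> eqa pre a x z).
{ intros a x y z [h1 h2] [h3 h4]; split; eauto. }
assert (wmin : forall P : I -> Prop, (exists a, P a) -> exists a, P a /\ forall b, lt b a -> ~ P b).
{ intros P [a Pa]. induction a as [a IH] using (well_founded_ind ltWf).
  destruct (classic (exists b, lt b a /\ P b)) as [[b [hb Pb]]|hn].
  - exact (IH b hb Pb).
  - exists a; split; auto. intros b hb Pb; apply hn; eauto. }
assert (dif : forall x y, x <> y -> exists a, ~ eqa pre a x y /\ forall b, lt b a -> eqa pre b x y).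
{ intros x y hne. destruct (wmin (fun a => ~ eqa pre a x y)) as [a [h1 h2]].
  - apply NNPP; intro hn. apply hne. apply A2. intro a. apply NNPP; intro h; apply hn; eauto.
  - exists a; split; auto. intros b hb; apply NNPP; apply h2; auto. }
assert (ltrans : forall x y z, sqlt pre x y -> sqlt pre y z -> sqlt pre x z).
{ intros x y z [a [h1 h2]] [b [h3 h4]].
  destruct (ltTot a b) as [hab|[<-|hba]].
  - exists a. pose proof (A1 a b hab y z h3) as e. split.
    + eapply pT; [exact h1| exact (proj1 e)].
    + intro e2. apply h2. eapply eT; [exact e2| apply eS; exact e].
  - exists a. split. eapply pT; eauto. intro e2. apply h4.
    split; [exact h3 | eapply pT; [exact (proj2 e2)| exact h1]].
  - exists b. pose proof (A1 b a hba x y h1) as e. split.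
    + eapply pT; [exact (proj1 e)| exact h3].
    + intro e2. apply h4. eapply eT; [apply eS; exact e| exact e2]. }
assert (nlt : forall d b, ~ lt d b -> lt b d \/ b = d).
{ intros d b h. destruct (ltTot b d) as [h'|[h'|h']]; auto. contradiction. }
split.
{ split; [intros; right; reflexivity|]. split.
  - intros x y z h1 h2; destruct h1 as [h1|e1]; destruct h2 as [h2|e2]; subst;
      unfold sqle; eauto.
  - intros x y [h1|e1] [h2|e2]; try congruence.
    destruct (ltrans _ _ _ h1 h2) as [c [_ hc]]; exfalso; apply hc; apply eR. }
split.
{ intro x. unfold bot.
  destruct (classic (sup (fun _ : L => False) = x)) as [e|hne]; [right; exact e|left].
  destruct (dif _ _ hne) as [a [hna hlow]].
  destruct (A3 x a (fun _ => False) (fun w f => False_ind _ f)) as [w [hw1 [_ hw3]]].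
  assert (hb0 : down lt pre x a (sup (fun _ : L => False))) by (intros c hc; apply eS; auto).
  assert (hx : down lt pre x a x) by (intros c hc; apply eR).
  destruct (hw3 _ hb0 (fun w f => False_ind _ f)) as [_ hle].
  assert (hge : le (sup (fun _ : L => False)) w)
    by (apply (proj2 (Hsup (fun _ => False))); intros ? []).
  assert (w = sup (fun _ : L => False)) by (apply leA; auto). subst w.
  destruct (hw3 x hx (fun w f => False_ind _ f)) as [hp _].
  exists a; split; auto. }
intros X _.
assert (down_tr : forall w w' b, (forall c, lt c b -> eqa pre c w w') ->
   forall x, down lt pre w b x -> down lt pre w' b x).
{ intros w w' b h x hx c hc. eapply eT; [apply eS; apply h; auto | apply hx; auto]. }
assert (transfer : forall w w' b, (forall c, lt c b -> eqa pre c w w') -> eqa pre b w w' ->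
   Cond X lt pre w b -> Cond X lt pre w' b).
{ intros w w' b hlow hb [c1 c2].
  assert (hlow' : forall c, lt c b -> eqa pre c w' w) by (intros; apply eS; auto).
  split.
  - intros x [hX hd]. eapply pT; [apply c1; split; [auto| eapply down_tr; [exact hlow'|exact hd]] | exact (proj1 hb)].
  - intros z hz hub. eapply pT; [exact (proj2 hb)|]. apply c2.
    + eapply down_tr; [exact hlow'|exact hz].
    + intros x [hX hd]. apply hub. split; auto. eapply down_tr; [exact hlow|exact hd]. }
assert (ntr : forall d b c, lt c b -> ~ lt d b -> ~ lt d c).
{ intros d b c h1 h2 h3. apply h2; eauto. }
assert (ntr2 : forall g d b, ~ lt g d -> ~ lt d b -> ~ lt g b).
{ intros g d b h1 h2 h3. destruct (nlt _ _ h2) as [h| ->]; eauto. }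
assert (uniq : forall d w w', good le X lt pre d w -> good le X lt pre d w' -> w = w').
{ intros d w w' [g1 g2] [g1' g2'].
  assert (H : forall b, ~ lt d b -> eqa pre b w w').
  { intro b. induction b as [b IH] using (well_founded_ind ltWf). intro hb.
    assert (hlow : forall c, lt c b -> eqa pre c w w')
      by (intros c hc; apply IH; auto; eapply ntr; eauto).
    assert (hlow' : forall c, lt c b -> eqa pre c w' w) by (intros; apply eS; auto).
    destruct (g1 b hb) as [c1 c2]. destruct (g1' b hb) as [c1' c2'].
    split.
    - apply c2. exact hlow.
      intros x [hX hd]. apply c1'. split; auto. eapply down_tr; [exact hlow|exact hd].
    - apply c2'. exact hlow'. intros x [hX hd]. apply c1. split; auto.
      eapply down_tr; [exact hlow'|exact hd]. }
  apply leA; [apply g2 | apply g2']; intros b hb; [| apply eS]; auto. }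
assert (restr : forall g d w, good le X lt pre g w -> ~ lt g d ->
   exists w', good le X lt pre d w' /\ AU lt pre d w w' /\ le w' w).
{ intros g d w [g1 g2] hgd.
  destruct (A3 w d (fun v => v = w)) as [w' [h1 [h2 h3]]].
  { intros v ->. intros c hc; apply eR. }
  assert (hww : pre d w w') by (apply h2; reflexivity).
  assert (hdw : down lt pre w d w) by (intros c hc; apply eR).
  assert (hvw : forall v, v = w -> pre d v w) by (intros v ->; apply pR).
  destruct (h3 w hdw hvw) as [h4 h5].
  assert (AUw : AU lt pre d w w').
  { intros b hb. destruct (nlt _ _ hb) as [hbd| ->]; [apply h1; auto | split; auto]. }
  exists w'. split; [|split; auto].
  split.
  - intros b hb. apply (transfer w w' b).
    + intros c hc. apply AUw. eapply ntr; eauto.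
    + apply AUw; auto.
    + apply g1. eapply ntr2; eauto.
  - intros z hz. refine (proj2 (h3 z _ _)).
    + intros c hc. eapply eT; [apply AUw | apply hz]; intro h; apply (ltIr c); eauto.
    + intros v ->. eapply pT; [exact hww | exact (proj1 (hz d (ltIr d)))]. }
assert (compat : forall d d' w w', good le X lt pre d w -> good le X lt pre d' w' ->
   ~ lt d' d -> AU lt pre d w w' /\ le w w').
{ intros d d' w w' H0 H1 H2. destruct (restr d' d w' H1 H2) as [w'' [g [a l]]].
  rewrite (uniq d w w'' H0 g). split; auto. intros b hb; apply eS; auto. }
assert (lim : forall S : I -> Prop, forall d w, S d -> good le X lt pre d w ->
   eqa pre d (sup (fun v => exists d', S d' /\ good le X lt pre d' v)) w).
{ intros S d w hS hg.
  set (G := fun v => exists d', S d' /\ good le X lt pre d' v).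
  set (Gd := fun v => exists d', S d' /\ ~ lt d' d /\ good le X lt pre d' v).
  assert (e1 : eqa pre d w (sup Gd)).
  { apply (A4 Gd d w). exists w. exists d. split; [exact hS|split; [apply ltIr|exact hg]].
    intros v [d' [_ [hd' hv]]]. destruct (compat d d' w v hg hv hd') as [hA _].
    apply hA. apply ltIr. }
  assert (e2 : sup G = sup Gd).
  { apply leA.
    - apply (proj2 (Hsup G)). intros v [d' [hS' hv]]. destruct (classic (lt d' d)) as [hl|hnl].
      + destruct (compat d' d v w hv hg (fun h => ltIr _ (ltT _ _ _ hl h))) as [_ hle].
        eapply leT; [exact hle|]. apply (proj1 (Hsup Gd)). exists d. split; [exact hS|split; [apply ltIr|exact hg]].
      + apply (proj1 (Hsup Gd)). exists d'; auto.
    - apply (proj2 (Hsup Gd)). intros v [d' [hS' [_ hv]]]. apply (proj1 (Hsup G)).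
      exists d'; auto. }
  rewrite e2. apply eS; auto. }
assert (ex : forall g, exists w, good le X lt pre g w).
{ intro g. induction g as [g IH] using (well_founded_ind ltWf).
  set (u := sup (fun v => exists d', lt d' g /\ good le X lt pre d' v)).
  assert (hu : forall d w, lt d g -> good le X lt pre d w -> eqa pre d u w)
    by (intros; apply (lim (fun d' => lt d' g)); auto).
  destruct (A3 u g (Xb X lt pre u g)) as [y [hy1 [hy2 hy3]]].
  { intros x [_ hd]; exact hd. }
  assert (agr : forall b, lt b g -> forall gb, good le X lt pre b gb ->
            forall c, ~ lt b c -> eqa pre c gb y).
  { intros b hbg gb hgb c hc.
    assert (hcg : lt c g) by (destruct (nlt _ _ hc) as [h| ->]; eauto).
    destruct (IH c hcg) as [gc hgc].
    destruct (compat c b gc gb hgc hgb hc) as [hA _].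
    eapply eT; [apply eS; apply hA; apply ltIr|].
    eapply eT; [apply eS; apply hu; eauto| apply hy1; auto]. }
  exists y. split.
  - intros b hb. destruct (nlt _ _ hb) as [hbg| ->].
    + destruct (IH b hbg) as [gb hgb].
      apply (transfer gb y b).
      * intros c hc. apply (agr b hbg gb hgb). intro h; apply (ltIr c); eauto.
      * apply (agr b hbg gb hgb). apply ltIr.
      * apply (proj1 hgb). apply ltIr.
    + split.
      * intros x [hX hd]. apply hy2. split; auto. intros c hc. eapply eT; [apply hy1; auto| apply hd; auto].
      * intros z hz hub. refine (proj1 (hy3 z (fun c hc => eT _ _ _ _ (hy1 c hc) (hz c hc)) _)).
        intros x [hX hd]. apply hub. split; auto. intros c hc.
        eapply eT; [apply eS, hy1; auto| apply hd; auto].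
  - intros z hz.
    assert (hdz : down lt pre u g z).
    { intros c hc. eapply eT; [apply hy1; auto| apply hz; intro h; apply (ltIr c); eauto]. }
    refine (proj2 (hy3 z hdz _)).
    intros x hx. eapply pT; [apply hy2; exact hx| exact (proj1 (hz g (ltIr g)))]. }
set (Y := sup (fun v => exists d', (fun _ : I => True) d' /\ good le X lt pre d' v)).
assert (hY : forall d w, good le X lt pre d w -> eqa pre d Y w)
  by (intros; apply (lim (fun _ : I => True)); auto).
assert (CY : forall b, Cond X lt pre Y b).
{ intro b. destruct (ex b) as [gb hgb]. apply (transfer gb Y b).
  - intros c hc. destruct (ex c) as [gc hgc].
    destruct (compat c b gc gb hgc hgb (fun h => ltIr _ (ltT _ _ _ hc h))) as [hA _].
    eapply eT; [apply eS, hA, ltIr| apply eS, hY; auto].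
  - apply eS, hY; auto.
  - apply (proj1 hgb), ltIr. }
exists Y. split.
- intros x hx. destruct (classic (x = Y)) as [e|hne]; [right; auto|left].
  destruct (dif _ _ hne) as [a [hna hlow]].
  exists a. split; auto. apply (proj1 (CY a)). split; auto. intros c hc; apply eS; auto.
- intros z hz. destruct (classic (Y = z)) as [e|hne]; [right; auto|left].
  destruct (dif _ _ hne) as [a [hna hlow]].
  exists a; split; auto. apply (proj2 (CY a)); auto.
  intros x [hX hd]. destruct (hz x hX) as [[c [h1 h2]]| <-].
  + destruct (ltTot c a) as [hca|[->|hac]].
    * exfalso. apply h2. eapply eT; [apply eS, hd; auto| apply hlow; auto].
    * exact h1.
    * exact (proj1 (A1 a c hac x z h1)).
  + apply pR.
Qed.
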